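(* Let $G=(V,E)$ be a simple graph with maximum degree $\Delta$, and let the algorithm WKP (described in the context) be run on an initial consistent link-coloring of $G$ with $\Delta$ colors. Then WKP either returns a proper $\Delta$-edge-coloring of $G$ (a consistent link-coloring with no variable edges) or returns a canonical configuration. Its running time is $O(|V||E|^2)$.
   Context: Each edge $e_{i,j}=v_iv_j$ of $G$ consists of two links $l_{i,j}$ (at $v_i$) and $l_{j,i}$ (at $v_j$). A configuration is a map $c$ assigning to each link a color from $C=\{c_1,\dots,c_\Delta\}$; write $c_{i,j}=c(l_{i,j})$ and the colored edge $\vec e_{i,j}=(c_{i,j},c_{j,i})$. It is a constant if $c_{i,j}=c_{j,i}$, a variable otherwise. A configuration is consistent if links at a common vertex have distinct colors, and proper if it is consistent with no variables (equivalently, a proper edge-coloring with $\Delta$ colors). For colors $\alpha\ne\beta$, an $(\alpha,\beta)$ path is a sequence of consecutive adjacent links all colored $\alpha$ or $\beta$; a maximal one is either an $(\alpha,\beta)$ cycle (closed) or an open path ending at the middle of an edge or at a vertex missing an $\alpha$- or $\beta$-colored link. A color exchange at a vertex $v_i$ swaps the colors of two links incident to $v_i$ (preserving consistency). A Kempe walk of an $(\alpha,\beta)$ variable along an $(\alpha,\beta)$ path is a sequence of color exchanges at successive interior vertices of the path: $(\alpha,\beta)\otimes(\alpha,\alpha)\Rightarrow(\alpha,\alpha)\circ(\beta,\alpha)$ (step forward), $(\alpha,\beta)\otimes(\alpha,\beta)\Rightarrow(\alpha,\alpha)\circ(\beta,\beta)$ (two variables eliminated), $(\alpha,\beta)\otimes(\alpha,\gamma)\Rightarrow(\alpha,\alpha)\circ(\beta,\gamma)$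 or, at a vertex with the corresponding link missing, $(\alpha,\beta)\Rightarrow(\alpha,\alpha)$ (one variable eliminated); here $(x,y)\otimes(z,w)\Rightarrow(x,z)\circ(y,w)$ denotes swapping the colors $y$ and $z$ of the two links meeting at the common vertex. Subroutine Variable-Walk($\vec e_{i,j}$) for a variable $\vec e_{i,j}=(\alpha,\beta)$: starting from one end $v_i$, follow the $(\alpha,\beta)$ path until (1) another variable is found, (2) it terminates at a vertex missing an $\alpha$ or $\beta$ link (or at the end of the maximal path), or (3) it returns to $v_j$, closing a cycle; in case (3) return false; otherwise perform the Kempe walk along the interior chain of this path (eliminating at least one variable) and return true. Algorithm WKP: (i) list all variables; (ii) if there are none, return the (proper) coloring; (iii) otherwise, for each variable in the list, call Variable-Walk; as soon as one call returns true, update the list and go to (ii); (iv) if all calls return false, return the current configuration. A canonical configuration is a consistent configuration in which no variable can be reduced by such a single-variable Kempe walk, i.e. Variable-Walk returns false for every variable (each remaining $(\alpha,\beta)$ variable lies on an $(\alpha,\beta)$ cycle containing no other variable). *)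

(* Defs.v *)
From mathcomp Require Import all_boot.

Set Implicit Arguments.
Unset Strict Implicit.
Unset Printing Implicit Defensive.

(* A configuration: c u v is the colour of the link l_{u,v} (the half of
   edge uv at u).  Values on non-links are
   irrelevant. *)
Definition config (T : Type) := T -> T -> nat.

Inductive outcome := OMissing | OFound | OCycle.

Section WKP.
Variables (T : finType) (adj : rel T).

Definition maxdeg : nat := \max_(v : T) #|[set w | adj v w]|.

Definition nedges : nat :=
  #|[set [set p.1; p.2] | p in [set q : T * T | adj q.1 q.2]]|.

Definition consistent (D : nat) (c : config T) : Prop :=
  (forall u v, adj u v -> c u v < D) /\
  (forall u v w, adj u v -> adj u w -> v != w -> c u v != c u w).

Definition is_variable (c : config T) (u v : T) : bool :=
  adj u v && (c u v != c v u).

Definition proper_coloring (D : nat) (c : config T) : Prop :=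
  consistent D c /\ (forall u v, adj u v -> c u v = c v u).

Definition upd (c : config T) (x y : T) (k : nat) : config T :=
  fun s t => if (s == x) && (t == y) then k else c s t.

(* colour exchange at x of the links l_{x,p} and l_{x,y}:
   (c p x, c x p) (x) (c x y, c y x) => (c p x, c x y) o (c x p, c y x),
   used with c x y = c p x. *)
Definition exch (c : config T) (p x y : T) : config T :=
  upd (upd c x p (c x y)) x y (c x p).

Definition other (a b k : nat) : nat := if k == a then b else a.

(* Following the (a,b) path (on the unmodified configuration c) which starts
   with the variable u-w (c u w = a, c w u = b) and proceeds from w.
   State: current vertex x and the colour k of the link to be taken at x.
   [trace c u w a b x k o n]: the path ends with outcome o after n edges:
   OMissing : x has no link coloured k (case (2));
   OFound   : the next edge x-y is another variable (case (1));
   OCycle   : the next edge is the starting variable u-w again, i.e. the path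
              closed a cycle back to it (case (3)). *)
Inductive trace (c : config T) (u w : T) (a b : nat) :
    T -> nat -> outcome -> nat -> Prop :=
| tr_missing x k :
    (forall y, adj x y -> c x y != k) -> trace c u w a b x k OMissing 0
| tr_cycle x k y :
    adj x y -> c x y = k -> x = u -> y = w -> trace c u w a b x k OCycle 1
| tr_found x k y :
    adj x y -> c x y = k -> (x, y) != (u, w) -> c y x != k ->
    trace c u w a b x k OFound 1
| tr_cont x k y o n :
    adj x y -> c x y = k -> (x, y) != (u, w) -> c y x = k ->
    trace c u w a b y (other a b k) o n -> trace c u w a b x k o n.+1.

Definition walk_trace (c : config T) (u w : T) (o : outcome) (n : nat) :=
  trace c u w (c u w) (c w u) w (c u w) o n.

(* The Kempe walk of the variable p-x (currently at x), as a sequence of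
   colour exchanges; [kempe c p x c' n]: it ends in c' after n exchanges. *)
Inductive kempe : config T -> T -> T -> config T -> nat -> Prop :=
| kw_missing c p x :
    (forall y, adj x y -> y != p -> c x y != c p x) ->
    kempe c p x (upd c x p (c p x)) 1
| kw_stop c p x y :
    adj x y -> y != p -> c x y = c p x -> c y x != c p x ->
    kempe c p x (exch c p x y) 1
| kw_cont c p x y c' n :
    adj x y -> y != p -> c x y = c p x -> c y x = c p x ->
    kempe (exch c p x y) x y c' n -> kempe c p x c' n.+1.

(* Variable-Walk on the variable u-w, started from the end w.
   Result None = "false" (configuration unchanged), Some c' = "true" with
   the new configuration c'.  The natural number is the cost (number of
   elementary steps: edges followed plus colour exchanges plus one). *)
Inductive vwalk (c : config T) (u w : T) : option (config T) -> nat -> Prop :=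
| vw_false n : walk_trace c u w OCycle n -> vwalk c u w None n.+1
| vw_true o n c' m :
    o <> OCycle -> walk_trace c u w o n -> kempe c u w c' m ->
    vwalk c u w (Some c') (n + m).+1.

Definition canonical (D : nat) (c : config T) : Prop :=
  consistent D c /\
  (forall u w, is_variable c u w -> exists n, walk_trace c u w OCycle n).

(* step (i): a list of all variables, each listed once, each with a chosen
   starting end (an oriented pair (v_j, v_i): the walk starts from v_i). *)
Definition var_list (c : config T) (l : seq (T * T)) : Prop :=
  [/\ (forall p, p \in l -> is_variable c p.1 p.2),
      (forall u v, is_variable c u v -> (u, v) \in l \/ (v, u) \in l)
    & uniq [seq [set p.1; p.2] | p <- l]].

Inductive process (c : config T) :
    seq (T * T) -> option (config T) -> nat -> Prop :=
| pr_nil : process c [::] None 0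
| pr_true u w l c' k :
    vwalk c u w (Some c') k -> process c ((u, w) :: l) (Some c') k
| pr_false u w l r k k' :
    vwalk c u w None k -> process c l r k' ->
    process c ((u, w) :: l) (r) (k + k').

Definition wkp_round (c c' : config T) (k : nat) : Prop :=
  exists2 l, var_list c l &
    exists k', process c l (Some c') k' /\ k = size l + k'.

(* the final round: no call returns true (including the case of no
   variables at all); WKP returns the current configuration *)
Definition wkp_final (c : config T) (k : nat) : Prop :=
  exists2 l, var_list c l &
    exists k', process c l None k' /\ k = size l + k'.

(* partial executions of WKP (any choice of lists/orders/ends) *)
Inductive wkp_exec : config T -> config T -> nat -> Prop :=
| ex_refl c : wkp_exec c c 0
| ex_step c c1 c2 k k' :
    wkp_round c c1 k -> wkp_exec c1 c2 k' -> wkp_exec c c2 (k + k').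

Definition wkp_run (c c' : config T) (k : nat) : Prop :=
  exists k1 k2, [/\ wkp_exec c c' k1, wkp_final c' k2 & k = k1 + k2].

End WKP.

(* Main.v *)
Require Import Defs.
From mathcomp Require Import all_boot zify.
Set Implicit Arguments. Unset Strict Implicit. Unset Printing Implicit Defensive.

Lemma otherK a b k : a != b -> (k == a) || (k == b) -> other a b (other a b k) = k.
Proof.
have ba : a != b -> (b == a) = false by rewrite eq_sym => /negbTE.
rewrite /other => h /orP[]/eqP->; rewrite ?(ba h) ?eqxx ?(ba h) ?eqxx //.
Qed.
Lemma other_neq a b k : a != b -> (k == a) || (k == b) -> other a b k != k.
Proof.
have ba : a != b -> (b == a) = false by rewrite eq_sym => /negbTE.
rewrite /other => h /orP[]/eqP->; rewrite ?(ba h) ?eqxx ?(ba h) //; by rewrite eq_sym.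
Qed.
Lemma other_in a b k : (other a b k == a) || (other a b k == b).
Proof. by rewrite /other; case: ifP; rewrite eqxx ?orbT. Qed.

Section Walk.
Variables (T : finType) (adj : rel T).
Hypothesis symA : symmetric adj.
Hypothesis irrA : irreflexive adj.
Variable c : config T.
Hypothesis cdist : forall x y z, adj x y -> adj x z -> c x y = c x z -> y = z.
Variables (u w : T) (a b : nat).
Hypothesis uw : adj u w.
Hypothesis cuw : c u w = a.
Hypothesis cwu : c w u = b.
Hypothesis ab : a != b.

Record Inv (d : config T) (P : {set T}) (p x : T) (k : nat) : Prop := {
  i_k : (k == a) || (k == b);
  i_x : x \notin P;
  i_adj : adj x p;
  i_p : p \in P \/ (p = u /\ x = w);
  i_cxp : c x p = other a b k;
  i_dpx : d p x = k;
  i_off : forall s t, s \notin P -> d s t = c s t;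
  i_c : forall v t, v \in P -> adj v t -> (c v t == a) || (c v t == b) ->
        [\/ t \in P, (t = x /\ v = p) | (v = w /\ t = u)];
  i_d : forall v t, v \in P -> adj v t -> (d v t == a) || (d v t == b) ->
        [\/ t \in P, (t = x /\ v = p) | (v = w /\ t = u)] }.

Lemma inv0 : Inv c set0 u w a.
Proof.
split => //; rewrite ?eqxx ?in_set0 //; first by rewrite symA.
  by right.
- by rewrite cwu /other eqxx.
- by move=> v t; rewrite in_set0.
- by move=> v t; rewrite in_set0.
Qed.

Lemma yp_neq d P p x k y : Inv d P p x k -> c x y = k -> y != p.
Proof.
move=> I cxy; apply/eqP=> yp; move: cxy; rewrite yp (i_cxp I) => /eqP.
by rewrite (negbTE (other_neq ab (i_k I))).
Qed.

Lemma notP_c d P p x k y : Inv d P p x k -> adj x y -> c x y = k -> c y x = k ->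
  (x, y) != (u, w) -> y \notin P.
Proof.
move=> I xy cxy cyx nuw; apply/negP=> yP.
have := i_c I yP (_ : adj y x); rewrite symA cyx (i_k I) => /(_ xy isT).
case=> [xP|[_ yp]|[yw xu]].
- by move: (i_x I); rewrite xP.
- by move: (yp_neq I cxy); rewrite yp eqxx.
- by move: nuw; rewrite yw xu eqxx.
Qed.

Lemma notP_d d P p x k y : Inv d P p x k -> adj x y -> c x y = k -> d y x = k ->
  (x, y) != (u, w) -> y \notin P.
Proof.
move=> I xy cxy cyx nuw; apply/negP=> yP.
have := i_d I yP (_ : adj y x); rewrite symA cyx (i_k I) => /(_ xy isT).
case=> [xP|[_ yp]|[yw xu]].
- by move: (i_x I); rewrite xP.
- by move: (yp_neq I cxy); rewrite yp eqxx.
- by move: nuw; rewrite yw xu eqxx.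
Qed.

Lemma exchE (d : config T) p x y s t : exch d p x y s t =
  if (s == x) && (t == y) then d x p else if (s == x) && (t == p) then d x y else d s t.
Proof. by []. Qed.

Lemma ab_cases x t1 t2 k : adj x t1 -> adj x t2 -> c x t1 = k -> c x t2 = other a b k ->
  (k == a) || (k == b) -> forall t, adj x t -> (c x t == a) || (c x t == b) -> t = t1 \/ t = t2.
Proof.
move=> a1 a2 c1 c2 kin t at0 tin.
have: (c x t == k) || (c x t == other a b k).
  have ba: (b == a) = false by rewrite eq_sym (negbTE ab).
  move: kin tin; rewrite /other; case/orP=>/eqP->; rewrite ?eqxx //.
  by rewrite ba orbC.
case/orP=>/eqP e; [left; apply: cdist at0 a1 _ | right; apply: cdist at0 a2 _]; congruence.
Qed.

Lemma inv_step d P p x k y : Inv d P p x k -> adj x y -> c x y = k -> c y x = k ->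
  (x, y) != (u, w) -> Inv (exch d p x y) (x |: P) x y (other a b k).
Proof.
move=> I xy cxy cyx nuw.
have yP := notP_c I xy cxy cyx nuw.
have ynp := yp_neq I cxy.
have xnP := i_x I.
have yx : y != x by apply/eqP=> e; move: xy; rewrite e irrA.
have kin := i_k I.
split.
- exact: other_in.
- by rewrite in_setU1 negb_or yx.
- by rewrite symA.
- by left; rewrite setU11.
- by rewrite cyx otherK.
- by rewrite exchE !eqxx /= (i_off I) // (i_cxp I).
- move=> s t; rewrite in_setU1 negb_or => /andP[sx sP].
  by rewrite exchE (negbTE sx) /= (i_off I).
- move=> v t; rewrite in_setU1 => /orP[/eqP vx|vP] vt tin.
  + subst v.
    have := ab_cases xy (i_adj I) cxy (i_cxp I) kin vt tin.
    case=> ->; first by constructor 2.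
    case: (i_p I) => [pP|[pu xw]]; first by constructor 1; rewrite in_setU1 pP orbT.
    by constructor 3; split.
  + case: (i_c I vP vt tin) => [tP|[tx vp]|[vw tu]].
    * by constructor 1; rewrite in_setU1 tP orbT.
    * by constructor 1; rewrite tx setU11.
    * by constructor 3; split.
- move=> v t; rewrite in_setU1 => /orP[/eqP vx|vP] vt.
  + subst v; rewrite exchE eqxx /=.
    have cxt_in : (c x t == a) || (c x t == b) -> [\/ t \in x |: P, t = y /\ x = x | x = w /\ t = u].
      move=> tin; have := ab_cases xy (i_adj I) cxy (i_cxp I) kin vt tin.
      case=> ->; first by constructor 2.
      case: (i_p I) => [pP|[pu xw]]; first by constructor 1; rewrite in_setU1 pP orbT.
      by constructor 3; split.
    case: (eqVneq t y) => [->|ty]; first by constructor 2.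
    case: (eqVneq t p) => [->|tp].
      case: (i_p I) => [pP|[pu xw]]; first by constructor 1; rewrite in_setU1 pP orbT.
      by constructor 3; split.
    by rewrite (i_off I).
  + have vx : v != x by apply: contraNneq xnP => <-.
    rewrite exchE (negbTE vx) /= => tin.
    case: (i_d I vP vt tin) => [tP|[tx vp]|[vw tu]].
    * by constructor 1; rewrite in_setU1 tP orbT.
    * by constructor 1; rewrite tx setU11.
    * by constructor 3; split.
Qed.

Lemma card_step x (P : {set T}) : x \notin P -> #|~: (x |: P)|.+1 = #|~: P|.
Proof.
move=> xP; have h1 := cardsC (x |: P); have h2 := cardsC P.
rewrite cardsU1 xP in h1; lia.
Qed.

Lemma trace_bound x k o n : trace adj c u w a b x k o n ->
  forall d P p, Inv d P p x k -> n <= #|~: P|.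
Proof.
elim=> {x k o n} [x k H | x k y xy cxy xu yw | x k y xy cxy nuw ncyx
  | x k y o n xy cxy nuw cyx tr IH] d P p I //.
- by rewrite -(card_step (i_x I)).
- by rewrite -(card_step (i_x I)).
- rewrite -(card_step (i_x I)) ltnS.
  exact: (IH _ _ _ (inv_step I xy cxy cyx nuw)).
Qed.

Lemma trace_exists m d P p x k : #|~: P| <= m -> Inv d P p x k ->
  exists o n, trace adj c u w a b x k o n.
Proof.
elim: m d P p x k => [|m IH] d P p x k hm I.
  by move: hm; rewrite -(card_step (i_x I)).
case: (pickP (fun y => adj x y && (c x y == k))) => [y /andP[xy /eqP cxy] | none].
- case: (eqVneq (x, y) (u, w)) => [[xu yw] | nuw].
    by exists OCycle, 1; apply: tr_cycle xy cxy xu yw.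
  case: (eqVneq (c y x) k) => [cyx | ncyx].
    have I' := inv_step I xy cxy cyx nuw.
    have hm' : #|~: (x |: P)| <= m by move: hm; rewrite -(card_step (i_x I)).
    have [o [n tr]] := IH _ _ _ _ _ hm' I'.
    by exists o, n.+1; apply: tr_cont xy cxy nuw cyx tr.
  by exists OFound, 1; apply: tr_found xy cxy nuw ncyx.
- exists OMissing, 0; apply: tr_missing => y xy; apply/eqP => e.
  by have := none y; rewrite xy e eqxx.
Qed.

Lemma trace_cont_inv x k o n y : trace adj c u w a b x k o n -> adj x y -> c x y = k ->
  c y x = k -> (x, y) != (u, w) ->
  exists n', n = n'.+1 /\ trace adj c u w a b y (other a b k) o n'.
Proof.
case=> {x k o n} [x k H | x k y' xy' cxy' xu yw | x k y' xy' cxy' nuw' ncyx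
  | x k y' o n xy' cxy' nuw' cyx' tr'] xy cxy cyx nuw.
- by move: (H y xy); rewrite cxy eqxx.
- have e : y = y' by apply: cdist xy xy' _; rewrite cxy cxy'.
  by move: nuw; rewrite e xu yw eqxx.
- have e : y = y' by apply: cdist xy xy' _; rewrite cxy cxy'.
  by move: ncyx; rewrite -e cyx eqxx.
- have e : y = y' by apply: cdist xy xy' _; rewrite cxy cxy'.
  by exists n; rewrite e.
Qed.

Lemma trace_uw x k o n y : trace adj c u w a b x k o n -> adj x y -> c x y = k ->
  (x, y) = (u, w) -> o = OCycle.
Proof.
case=> {x k o n} [x k H | x k y' xy' cxy' xu yw | x k y' xy' cxy' nuw' ncyx
  | x k y' o n xy' cxy' nuw' cyx' tr'] xy cxy [ex ey] //.
- by move: (H y xy); rewrite cxy eqxx.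
- have e : y = y' by apply: cdist xy xy' _; rewrite cxy cxy'.
  by move: nuw'; rewrite -e ex ey eqxx.
- have e : y = y' by apply: cdist xy xy' _; rewrite cxy cxy'.
  by move: nuw'; rewrite -e ex ey eqxx.
Qed.

Lemma kempe_exists x k o n : trace adj c u w a b x k o n -> o <> OCycle ->
  forall d P p, Inv d P p x k -> exists d' m, kempe adj d p x d' m.
Proof.
elim=> {x k o n} [x k H | x k y xy cxy xu yw | x k y xy cxy nuw ncyx
  | x k y o n xy cxy nuw cyx tr IH] no d P p I //.
- exists (upd d x p (d p x)), 1; apply: kw_missing => y xy yp.
  by rewrite (i_off I _ (i_x I)) (i_dpx I) H.
- have ynp := yp_neq I cxy.
  exists (exch d p x y), 1; apply: kw_stop => //.
    by rewrite (i_off I _ (i_x I)) (i_dpx I).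
  rewrite (i_dpx I); apply/eqP => e.
  have yP := notP_d I xy cxy e nuw.
  by move: ncyx; rewrite -(i_off I _ yP) e eqxx.
- have yP := notP_c I xy cxy cyx nuw.
  have ynp := yp_neq I cxy.
  have [d' [m K]] := IH no _ _ _ (inv_step I xy cxy cyx nuw).
  exists d', m.+1; apply: kw_cont K => //.
    by rewrite (i_off I _ (i_x I)) (i_dpx I).
  by rewrite (i_off I _ yP) (i_dpx I).
Qed.

Lemma kempe_bound d p x d' m : kempe adj d p x d' m ->
  forall P k o n, trace adj c u w a b x k o n -> o <> OCycle -> Inv d P p x k -> m <= #|~: P|.
Proof.
elim=> {d p x d' m} [d p x H | d p x y xy ynp dxy dyx | d p x y d' m xy ynp dxy dyx K IH]
  P k o n tr no I; try by rewrite -(card_step (i_x I)).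
have cxy : c x y = k by rewrite -(i_off I _ (i_x I)) dxy (i_dpx I).
have nuw : (x, y) != (u, w) by apply/eqP => e; exact: no (trace_uw tr xy cxy e).
have dyx' : d y x = k by rewrite dyx (i_dpx I).
have yP := notP_d I xy cxy dyx' nuw.
have cyx : c y x = k by rewrite -(i_off I _ yP).
have [n' [_ tr']] := trace_cont_inv tr xy cxy cyx nuw.
rewrite -(card_step (i_x I)) ltnS.
exact: IH _ _ _ _ tr' no (inv_step I xy cxy cyx nuw).
Qed.

End Walk.

Lemma otherS a b k : a != b -> (k == a) || (k == b) -> other b a k = other a b k.
Proof.
have ba : a != b -> (b == a) = false by rewrite eq_sym => /negbTE.
rewrite /other => h /orP[]/eqP->; rewrite ?(ba h) ?eqxx //; by rewrite eq_sym (ba h).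
Qed.

Section Rev.
Variables (T : finType) (adj : rel T).
Hypothesis symA : symmetric adj.
Variable c : config T.
Variables (u w : T).
Hypothesis uw : adj u w.
Hypothesis ab : c u w != c w u.

Lemma rev_trace_gen x k o n : trace adj c w u (c w u) (c u w) x k o n -> o = OCycle ->
  (k == c u w) || (k == c w u) ->
  (exists m, trace adj c u w (c u w) (c w u) x (other (c u w) (c w u) k) OCycle m) ->
  exists m, walk_trace adj c u w OCycle m.
Proof.
elim=> {x k o n} [x k H | x k y xy cxy xu yw | x k y xy cxy nuw ncyx
  | x k y o n xy cxy nuw cyx tr IH] // eo kin [m tr'].
- have kb : k = c w u by rewrite -cxy xu yw.
  subst k; exists m; move: tr'; rewrite /other xu yw eq_sym (negbTE ab).
  by rewrite /walk_trace.
- apply: IH => //.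
    by rewrite otherS // ?other_in // eq_sym.
  have ab' : c w u != c u w by rewrite eq_sym.
  exists m.+1; rewrite otherS // ?other_in // otherK //; last by rewrite orbC.
  apply: tr_cont tr' => //.
  + by rewrite symA.
  + by move: nuw; apply: contra => /eqP[-> ->].
Qed.

Lemma rev_trace n : walk_trace adj c w u OCycle n -> exists m, walk_trace adj c u w OCycle m.
Proof.
move=> tr; apply: (rev_trace_gen tr) => //; first by rewrite eqxx orbT.
exists 1; rewrite /other eq_sym (negbTE ab).
exact: (tr_cycle _ _ uw erefl erefl erefl).
Qed.
End Rev.

Section G.
Variables (T : finType) (adj : rel T).
Hypothesis symA : symmetric adj.
Hypothesis irrA : irreflexive adj.

Lemma cons_dist D c : consistent adj D c -> forall x y z, adj x y -> adj x z -> c x y = c x z -> y = z.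
Proof.
move=> [_ H] x y z xy xz e; case: (eqVneq y z) => // ne.
by move: (H _ _ _ xy xz ne); rewrite e eqxx.
Qed.

Lemma walk_exists D c u w : consistent adj D c -> is_variable adj c u w ->
  exists o n, walk_trace adj c u w o n.
Proof.
move=> C /andP[uw ab].
exact: (trace_exists symA irrA (cons_dist C) uw erefl erefl ab (leqnn _) (inv0 symA uw erefl erefl)).
Qed.

Lemma walk_bound D c u w o n : consistent adj D c -> is_variable adj c u w ->
  walk_trace adj c u w o n -> n <= #|T|.
Proof.
move=> C /andP[uw ab] tr.
have := trace_bound symA irrA (cons_dist C) uw erefl erefl ab tr (inv0 symA uw erefl erefl).
by rewrite setC0 cardsT.
Qed.

Lemma walk_kempe_exists D c u w o n : consistent adj D c -> is_variable adj c u w ->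
  walk_trace adj c u w o n -> o <> OCycle -> exists c' m, kempe adj c u w c' m.
Proof.
move=> C /andP[uw ab] tr no.
exact: (kempe_exists symA irrA (cons_dist C) ab tr no (inv0 symA uw erefl erefl)).
Qed.

Lemma walk_kempe_bound D c u w o n c' m : consistent adj D c -> is_variable adj c u w ->
  walk_trace adj c u w o n -> o <> OCycle -> kempe adj c u w c' m -> m <= #|T|.
Proof.
move=> C /andP[uw ab] tr no K.
have := kempe_bound symA irrA (cons_dist C) uw erefl erefl ab K tr no (inv0 symA uw erefl erefl).
by rewrite setC0 cardsT.
Qed.

Definition VS (c : config T) : {set {set T}} :=
  [set [set q.1; q.2] | q in [set q : T * T | is_variable adj c q.1 q.2]].
Definition Eset : {set {set T}} := [set [set p.1; p.2] | p in [set q : T * T | adj q.1 q.2]].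

Lemma VSP c e : reflect (exists q1 q2, e = [set q1; q2] /\ is_variable adj c q1 q2) (e \in VS c).
Proof.
apply: (iffP imsetP).
  by case=> [[q1 q2]]; rewrite inE /= => h ->; exists q1, q2.
by case=> [q1 [q2 [-> h]]]; exists (q1, q2); rewrite ?inE.
Qed.

Lemma VS_sub c : VS c \subset Eset.
Proof. by apply: imsetS; apply/subsetP => q; rewrite !inE => /andP[]. Qed.

Lemma set2_eq (p x q1 q2 : T) : p != x -> [set q1; q2] = [set p; x] ->
  (q1 = p /\ q2 = x) \/ (q1 = x /\ q2 = p).
Proof.
move=> px e.
have hp : p \in [set q1; q2] by rewrite e set21.
have hx : x \in [set q1; q2] by rewrite e set22.
move: hp hx; rewrite !in_set2.
case/orP=> /eqP hp; case/orP=> /eqP hx; subst; auto; by rewrite eqxx in px.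
Qed.

Lemma exch_other (d : config T) p x y s t : ~~ ((s == x) && ((t == y) || (t == p))) ->
  exch d p x y s t = d s t.
Proof.
rewrite exchE; case: (s == x) => //=; case: (t == y) => //=; by case: (t == p).
Qed.

Lemma exch_cons D d p x y : consistent adj D d -> adj x p -> adj x y -> y != p ->
  consistent adj D (exch d p x y).
Proof.
move=> [H1 H2] xp xy yp; split.
- move=> s t st; rewrite exchE.
  case: ifP => _; first exact: H1 xp.
  case: ifP => _; first exact: H1 xy.
  exact: H1 st.
- move=> s v t sv st vt.
  case: (eqVneq s x) => [es|sx]; last first.
    by rewrite !exchE (negbTE sx) /=; apply: H2.
  subst s.
  pose sg t := if t == y then p else if t == p then y else t.
  have E t0 : exch d p x y x t0 = d x (sg t0).
    by rewrite exchE eqxx /= /sg; case: ifP => //; case: ifP.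
  have sgK : involutive sg.
    have py : (p == y) = false by rewrite eq_sym (negbTE yp).
    move=> t0; rewrite /sg; case: (eqVneq t0 y) => [->|ty].
      by rewrite eqxx py.
    case: (eqVneq t0 p) => [->|tp]; first by rewrite ?eqxx ?py ?eqxx.
    by rewrite (negbTE ty) (negbTE tp).
  have sgA t0 : adj x t0 -> adj x (sg t0).
    by rewrite /sg; case: ifP => // _; case: ifP.
  rewrite !E; apply: H2; try exact: sgA.
  by rewrite (inj_eq (inv_inj sgK)).
Qed.

Lemma upd_cons D d p x : consistent adj D d -> adj p x ->
  (forall y, adj x y -> y != p -> d x y != d p x) -> consistent adj D (upd d x p (d p x)).
Proof.
move=> [H1 H2] px H; split.
- move=> s t st; rewrite /upd; case: ifP => _; [exact: H1 | exact: H1].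
- move=> s v t sv st vt; rewrite /upd.
  case: (eqVneq s x) => [es|sx] /=; last exact: H2.
  subst s.
  case: (eqVneq v p) => [ev|vp] /=.
    subst v; rewrite eq_sym in vt; rewrite (negbTE vt) eq_sym; exact: H.
  case: (eqVneq t p) => [et|tp] /=; first by subst t; apply: H.
  exact: H2.
Qed.

Lemma kempe_cons D d p x d' m : kempe adj d p x d' m -> consistent adj D d ->
  is_variable adj d p x -> consistent adj D d'.
Proof.
elim=> {d p x d' m} [d p x H | d p x y xy yp dxy dyx | d p x y d' m xy yp dxy dyx K IH]
  C /andP[px v].
- exact: upd_cons.
- by apply: exch_cons => //; rewrite symA.
- apply: IH; first by apply: exch_cons => //; rewrite symA.
  have yx : (y == x) = false by apply/negbTE/eqP => e; move: xy; rewrite e irrA.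
  by rewrite /is_variable xy /= !exchE eqxx /= yx /= eqxx dyx eq_sym.
Qed.

Lemma exch_var d p x y : adj x y -> is_variable adj d p x -> d y x = d p x ->
  is_variable adj (exch d p x y) x y.
Proof.
move=> xy /andP[_ v] dyx.
have yx : (y == x) = false by apply/negbTE/eqP => e; move: xy; rewrite e irrA.
by rewrite /is_variable xy /= !exchE eqxx /= yx /= eqxx dyx eq_sym.
Qed.

Lemma exch_VS d p x y e : adj x y -> adj p x -> y != p -> d x y = d p x ->
  e \in VS (exch d p x y) -> e != [set p; x] /\ (e \in VS d \/ e = [set x; y]).
Proof.
move=> xy px yp dxy /VSP [q1 [q2 [-> /andP[a12 v]]]]; clear e.
have pxn : p != x by apply/eqP => ee; move: px; rewrite ee irrA.
have py : (p == y) = false by rewrite eq_sym (negbTE yp).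
have pxf : (p == x) = false by apply/negbTE.
have NP : [set q1; q2] != [set p; x].
  apply/eqP => /(set2_eq pxn) [[e1 e2]|[e1 e2]]; subst;
  by move: v; rewrite !exchE eqxx pxf py /= eqxx /= dxy eqxx.
split => //.
case: (boolP ((q1 == x) && ((q2 == y) || (q2 == p)))) => [/andP[/eqP e1 /orP[]/eqP e2]|N1].
- by right; rewrite e1 e2.
- by move: NP; rewrite e1 e2 setUC eqxx.
case: (boolP ((q2 == x) && ((q1 == y) || (q1 == p)))) => [/andP[/eqP e1 /orP[]/eqP e2]|N2].
- by right; rewrite e1 e2 setUC.
- by move: NP; rewrite e1 e2 eqxx.
left; apply/VSP; exists q1, q2; split => //.
by rewrite /is_variable a12 -(exch_other d N1) -(exch_other d N2).
Qed.

Lemma kempe_VS d p x d' m : kempe adj d p x d' m -> is_variable adj d p x ->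
  forall e, e \in VS d' -> e \in VS d /\ e != [set p; x].
Proof.
elim=> {d p x d' m} [d p x H | d p x y xy yp dxy dyx | d p x y d' m xy yp dxy dyx K IH]
  V e.
- case/VSP => [q1 [q2 [-> /andP[a12 v]]]].
  move: (V) => /andP[px _].
  have pxn : p != x by apply/eqP => ee; move: px; rewrite ee irrA.
  have pxf : (p == x) = false by apply/negbTE.
  have NP : [set q1; q2] != [set p; x].
    apply/eqP => /(set2_eq pxn) [[e1 e2]|[e1 e2]]; subst;
    by move: v; rewrite /upd !eqxx ?pxf /= ?eqxx.
  split => //; apply/VSP; exists q1, q2; split => //.
  rewrite /is_variable a12; move: v; rewrite /upd.
  case: ifP => [/andP[/eqP e1 /eqP e2]|_].
    by move: NP; rewrite e1 e2 setUC eqxx.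
  case: ifP => [/andP[/eqP e1 /eqP e2]|_] //.
  by move: NP; rewrite e1 e2 eqxx.
- move: (V) => /andP[px v0] He.
  have [NP [Hd|exy]] := exch_VS xy px yp dxy He; first by split.
  split => //; rewrite exy; apply/VSP; exists x, y; split => //.
  by rewrite /is_variable xy /= dxy eq_sym.
- move: (V) => /andP[px v0] He.
  have [He1 Nxy] := IH (exch_var xy V dyx) _ He.
  have [NP [Hd|exy]] := exch_VS xy px yp dxy He1; first by split.
  by move: Nxy; rewrite exy eqxx.
Qed.

Lemma kempe_card d p x d' m : kempe adj d p x d' m -> is_variable adj d p x ->
  #|VS d'| < #|VS d|.
Proof.
move=> K V.
have sub : VS d' \subset VS d :\ [set p; x].
  apply/subsetP => e He; have [h1 h2] := kempe_VS K V He.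
  by rewrite in_setD1 h1 h2.
have inV : [set p; x] \in VS d by apply/VSP; exists p, x.
have := subset_leq_card sub; rewrite (cardsD1 [set p; x] (VS d)) inV.
by rewrite add1n ltnS.
Qed.

End G.

Section H.
Variables (T : finType) (adj : rel T).
Hypothesis symA : symmetric adj.
Hypothesis irrA : irreflexive adj.

Let B := (#|T| + #|T|).+1.

Lemma vwalk_some c u w c' k : vwalk adj c u w (Some c') k ->
  exists o n m, [/\ o <> OCycle, walk_trace adj c u w o n & kempe adj c u w c' m].
Proof.
move H: (Some c') => r V; case: V H => // o n c1 m no tr K [->].
by exists o, n, m.
Qed.

Lemma vwalk_none c u w k : vwalk adj c u w None k -> exists n, walk_trace adj c u w OCycle n.
Proof. by move H: None => r V; case: V H => // n tr _; exists n. Qed.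

Lemma vwalk_cost D c u w r k : consistent adj D c -> is_variable adj c u w ->
  vwalk adj c u w r k -> k <= B.
Proof.
move=> C V; case=> [n tr | o n c' m no tr K].
- have := walk_bound symA irrA C V tr; rewrite /B; lia.
- have := walk_bound symA irrA C V tr; have := walk_kempe_bound symA irrA C V tr no K.
  rewrite /B; lia.
Qed.

Lemma process_cost D c l r k : consistent adj D c ->
  (forall q, q \in l -> is_variable adj c q.1 q.2) -> process adj c l r k -> k <= size l * B.
Proof.
move=> C Hl P; elim: P Hl => {l r k} [|u w l c' k V|u w l r k k' V P IH] Hl //.
- have := vwalk_cost C (Hl _ (mem_head _ _)) V; rewrite /=; nia.
- have h1 := vwalk_cost C (Hl _ (mem_head _ _)) V.
  have h2 : k' <= size l * B by apply: IH => q ql; apply: Hl; rewrite in_cons ql orbT.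
  rewrite /=; nia.
Qed.

Lemma process_some c l r k : process adj c l r k ->
  forall c', r = Some c' -> exists u w m, (u, w) \in l /\ kempe adj c u w c' m.
Proof.
elim=> {l r k} [|u w l c' k V|u w l r k k' V P IH] c0 //.
- move=> [<-]; have [o [n [m [_ _ K]]]] := vwalk_some V.
  by exists u, w, m; rewrite mem_head.
- move=> e; have [u' [w' [m [ul K]]]] := IH _ e.
  by exists u', w', m; rewrite in_cons ul orbT.
Qed.

Lemma process_none c l r k : process adj c l r k -> r = None ->
  forall q, q \in l -> exists n, walk_trace adj c q.1 q.2 OCycle n.
Proof.
elim=> {l r k} [|u w l c' k V|u w l r k k' V P IH] // e q.
rewrite in_cons => /orP[/eqP -> | ql]; first exact: vwalk_none V.
exact: IH.
Qed.

Lemma process_exists D c l : consistent adj D c ->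
  (forall q, q \in l -> is_variable adj c q.1 q.2) -> exists r k, process adj c l r k.
Proof.
move=> C; elim: l => [|[u w] l IH] Hl; first by exists None, 0; constructor.
have Vh := Hl _ (mem_head _ _).
have [o [n tr]] := walk_exists symA irrA C Vh.
have [eo|no] : o = OCycle \/ o <> OCycle by case: (o); [right|right|left].
- subst o.
  have [r [k P]] : exists r k, process adj c l r k.
    by apply: IH => q ql; apply: Hl; rewrite in_cons ql orbT.
  exists r, (n.+1 + k); apply: pr_false P.
  exact: vw_false.
- have [c' [m K]] := walk_kempe_exists symA irrA C Vh tr no.
  exists (Some c'), (n + m).+1; apply: pr_true.
  exact: vw_true no tr K.
Qed.

Definition pk (c : config T) (e : {set T}) :=
  [pick q : T * T | is_variable adj c q.1 q.2 && ([set q.1; q.2] == e)].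

Lemma pkP c e q : pk c e = Some q -> is_variable adj c q.1 q.2 /\ [set q.1; q.2] = e.
Proof. by rewrite /pk; case: pickP => [q' /andP[h /eqP h'] [<-]|_]. Qed.

Lemma pk_some c e : e \in VS adj c -> exists q, pk c e = Some q.
Proof.
case/VSP => q1 [q2 [-> V]]; rewrite /pk; case: pickP => [q _|none]; first by exists q.
by have := none (q1, q2); rewrite /= V eqxx.
Qed.

Lemma map_pk c s : {subset s <= VS adj c} ->
  [seq [set q.1; q.2] | q <- pmap (pk c) s] = s.
Proof.
elim: s => [|e s IH] //= Hs.
have [q hq] := pk_some (Hs _ (mem_head _ _)).
rewrite hq /= (pkP hq).2 IH // => x xs; apply: Hs; by rewrite in_cons xs orbT.
Qed.

Lemma var_list_exists c : exists l, var_list adj c l.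
Proof.
exists (pmap (pk c) (enum (VS adj c))); split.
- move=> q; rewrite mem_pmap => /mapP [e _ /esym /pkP []] //.
- move=> u v V.
  have uv : u != v by apply/eqP => e; move: V => /andP[]; rewrite e irrA.
  have inV : [set u; v] \in VS adj c by apply/VSP; exists u, v.
  have [q hq] := pk_some inV.
  have ql : q \in pmap (pk c) (enum (VS adj c)).
    by rewrite mem_pmap -hq; apply: map_f; rewrite mem_enum.
  case: q hq ql => q1 q2 hq ql; have [_ E] := pkP hq; move: E ql => /= /(set2_eq uv) [[-> ->]|[-> ->]] ql.
    by left.
  by right.
- by rewrite map_pk ?enum_uniq // => e; rewrite mem_enum.
Qed.

Lemma var_list_size c l : var_list adj c l -> size l <= nedges adj.
Proof.
case=> H1 _ H3.
rewrite -(size_map (fun q => [set q.1; q.2])) /nedges cardE.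
apply: uniq_leq_size => // e /mapP [q ql ->]; rewrite mem_enum.
apply: imset_f; rewrite inE; by case/andP: (H1 _ ql).
Qed.

Lemma round_prop D c c1 k : consistent adj D c -> wkp_round adj c c1 k ->
  [/\ consistent adj D c1, #|VS adj c1| < #|VS adj c| & k <= nedges adj * B.+1].
Proof.
move=> C [l L [k' [P ->]]].
have [u [w [m [ul K]]]] := process_some P erefl.
have V : is_variable adj c u w by case: L => H1 _ _; apply: (H1 (u, w)).
split.
- exact: kempe_cons K C V.
- exact: kempe_card K V.
- have := process_cost C (let: And3 h _ _ := L in h) P.
  have := var_list_size L => h1 h2.
  apply: (leq_trans (_ : _ <= size l * B.+1)); last exact: leq_mul h1 (leqnn _).
  by rewrite mulnS leq_add2l.
Qed.

Lemma final_cost D c k : consistent adj D c -> wkp_final adj c k -> k <= nedges adj * B.+1.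
Proof.
move=> C [l L [k' [P ->]]].
have := process_cost C (let: And3 h _ _ := L in h) P.
have := var_list_size L => h1 h2.
apply: (leq_trans (_ : _ <= size l * B.+1)); last exact: leq_mul h1 (leqnn _).
by rewrite mulnS leq_add2l.
Qed.

Lemma exec_prop D c c' k : consistent adj D c -> wkp_exec adj c c' k ->
  consistent adj D c' /\ k <= #|VS adj c| * (nedges adj * B.+1).
Proof.
move=> C E; elim: E C => {c c' k} [c|c c1 c2 k k' R E IH] C; first by split.
have [C1 lt kb] := round_prop C R.
have [C2 kb'] := IH C1; split => //; nia.
Qed.

Lemma run_exists D c : consistent adj D c -> exists c' k, wkp_run adj c c' k.
Proof.
move: {2}#|VS adj c| (leqnn #|VS adj c|) => N; elim: N c => [|N IH] c hN C.
all: have [l L] := var_list_exists c.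
all: have [r [k P]] := process_exists C (let: And3 h _ _ := L in h).
all: case: r P => [c1|] P.
- have R : wkp_round adj c c1 (size l + k) by exists l => //; exists k.
  have [_ lt _] := round_prop C R; by move: hN lt; rewrite leqn0 => /eqP ->.
- exists c, (size l + k), 0, (size l + k); split => //; first exact: ex_refl.
  by exists l => //; exists k.
- have R : wkp_round adj c c1 (size l + k) by exists l => //; exists k.
  have [C1 lt _] := round_prop C R.
  have [c' [k1 [k2 [k3 [E F ek]]]]] := IH c1 (leq_trans lt hN) C1.
  exists c', (size l + k + k1), (size l + k + k2), k3.
  split; [exact: ex_step R E | exact: F | by rewrite ek addnA].
- exists c, (size l + k), 0, (size l + k); split => //; first exact: ex_refl.
  by exists l => //; exists k.
Qed.

Lemma final_canonical D c k : consistent adj D c -> wkp_final adj c k -> canonical adj D c.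
Proof.
move=> C [l [H1 H2 H3] [k' [P _]]]; split => // u v V.
have := process_none P erefl.
move: (V) => /andP[uv ab].
case: (H2 _ _ V) => [ql|ql] /(_ _ ql) /= [n tr]; first by exists n.
exact: (rev_trace symA uv ab tr).
Qed.

End H.

Lemma arith (t n k1 k2 : nat) : (0 < n -> 0 < t) ->
  k1 <= n * (n * (t + t).+2) -> k2 <= n * (t + t).+2 -> k1 + k2 <= 8 * (t * n ^ 2).
Proof.
move=> H h1 h2; case: n H h1 h2 => [|n] H h1 h2.
  by move: h1 h2; rewrite !mul0n; lia.
have := H isT; nia.
Qed.

Theorem theorem1 :
  exists C : nat, forall (T : finType) (adj : rel T),
    symmetric adj -> irreflexive adj ->
    forall c0 : config T, consistent adj (maxdeg adj) c0 ->
    [/\ (forall c k, wkp_exec adj c0 c k ->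
           k <= C * (#|T| * nedges adj ^ 2)),
        (forall c k, wkp_exec adj c0 c k -> exists c' k', wkp_run adj c c' k'),
        (forall c k, wkp_run adj c0 c k ->
           k <= C * (#|T| * nedges adj ^ 2))
      & (forall c k, wkp_run adj c0 c k ->
           proper_coloring adj (maxdeg adj) c \/ canonical adj (maxdeg adj) c)].
Proof.
exists 8 => T adj symA irrA c0 C0.
have Hne c : #|VS adj c| <= nedges adj by apply: subset_leq_card; apply: VS_sub.
have pos : 0 < nedges adj -> 0 < #|T|.
  case/card_gt0P => e /imsetP [q _ _].
  by rewrite -cardsT; apply/card_gt0P; exists q.1; rewrite inE.
have exb c k : wkp_exec adj c0 c k -> k <= nedges adj * (nedges adj * (#|T| + #|T|).+2).
  move=> E; have [_ kb] := exec_prop symA irrA C0 E.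
  by apply: (leq_trans kb); apply: leq_mul.
split.
- move=> c k E; rewrite -[k]addn0; apply: arith (exb _ _ E) _ => //.
- move=> c k E; have [C _] := exec_prop symA irrA C0 E. exact (run_exists symA irrA C).
- move=> c k [k1 [k2 [E F ->]]]; apply: arith (exb _ _ E) _ => //.
  have [C _] := exec_prop symA irrA C0 E; exact (final_cost symA irrA C F).
- move=> c k [k1 [k2 [E F _]]]; right.
  have [C _] := exec_prop symA irrA C0 E; exact (final_canonical symA C F).
Qed.
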